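(* Let $N\ge 3$ and $\boldsymbol\theta\in\mathbb{R}^N$, and let $|0_L\rangle,|1_L\rangle,P,Z_L$ be the dephasing code associated with $\boldsymbol\theta$. Then $|0_L\rangle$ and $|1_L\rangle$ are orthonormal, and for all $\mathbf v,\mathbf u\in\mathbb{R}^N$: $P(\mathbf v\cdot\mathbf Z)P=(\mathbf v\cdot\cos(2\boldsymbol\theta))\,Z_L$ and $P(\mathbf v\cdot\mathbf Z)(\mathbf u\cdot\mathbf Z)P\in\mathbb{R}P$, where $\cos$ is applied entrywise. In particular, if $\cos(2\boldsymbol\theta)\perp\mathrm{col}(C)$, then $PSP\in\mathbb{R}P$ for every $S$ in the Lindblad span $\mathfrak{S}$ of the dephasing model, and $PHP=\tfrac12(\boldsymbol{\mathfrak h}\cdot\cos(2\boldsymbol\theta))Z_L$.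
   Context: Qubits $1,\dots,N$; $Z_j$, $X_j$ denote the Pauli $Z$, $X$ operators on qubit $j$ of $(\mathbb{C}^2)^{\otimes N}$, with $Z|0\rangle=|0\rangle$, $Z|1\rangle=-|1\rangle$. For $\mathbf v\in\mathbb{R}^N$, $\mathbf v\cdot\mathbf Z:=\sum_j v_jZ_j$. Dephasing model: $\boldsymbol{\mathfrak h}\in\mathbb{R}^N$, $H=\tfrac12\boldsymbol{\mathfrak h}\cdot\mathbf Z$; $C$ is a real symmetric positive semidefinite $N\times N$ matrix with orthonormal eigenvectors $\mathbf v_1,\dots,\mathbf v_N$ and eigenvalues $\lambda_1,\dots,\lambda_N\ge0$; $L_j=\sqrt{\lambda_j}\,\mathbf v_j\cdot\mathbf Z$; $\mathrm{col}(C)$ and $\ker(C)$ are the column space and kernel of $C$; the Lindblad span $\mathfrak{S}$ is the real span of $I$, all $L_i$ and all $L_iL_j$. Dephasing code for $\boldsymbol\theta\in\mathbb{R}^N$: $|0_L\rangle=\bigotimes_{j=1}^N(\cos\theta_j|0\rangle+i\sin\theta_j|1\rangle)$, $|1_L\rangle=X^{\otimes N}|0_L\rangle$, $P=|0_L\rangle\langle0_L|+|1_L\rangle\langle1_L|$, $Z_L=|0_L\rangle\langle0_L|-|1_L\rangle\langle1_L|$. *)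

(* Defs.v *)
(* Complex numbers are
   represented as pairs (re, im) of reals; vectors/operators on
   (C^2)^{tensor N} as functions on computational-basis indices
   k in {0, ..., 2^N - 1}, where bit j of k (Nat.testbit k j) is the state
   of qubit j (qubits are numbered 0..N-1 instead of 1..N). *)
From Stdlib Require Import Reals Lra Lia Arith List.
Open Scope R_scope.

Definition Cx : Type := (R * R)%type.
Definition RtoC (r : R) : Cx := (r, 0).
Definition Czero : Cx := (0, 0).
Definition Cone : Cx := (1, 0).
Definition Cadd (z w : Cx) : Cx := (fst z + fst w, snd z + snd w).
Definition Cmul (z w : Cx) : Cx :=
  (fst z * fst w - snd z * snd w, fst z * snd w + snd z * fst w).
Definition Cconj (z : Cx) : Cx := (fst z, - snd z).

Fixpoint Csum (n : nat) (f : nat -> Cx) : Cx :=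
  match n with O => Czero | S m => Cadd (Csum m f) (f m) end.
Fixpoint Cprod (n : nat) (f : nat -> Cx) : Cx :=
  match n with O => Cone | S m => Cmul (Cprod m f) (f m) end.
Fixpoint Rsum (n : nat) (f : nat -> R) : R :=
  match n with O => 0 | S m => Rsum m f + f m end.

Definition Rdot (N : nat) (v u : nat -> R) : R := Rsum N (fun j => v j * u j).
Definition Rmatvec (N : nat) (C : nat -> nat -> R) (x : nat -> R) : nat -> R :=
  fun i => Rsum N (fun j => C i j * x j).
Definition cos2theta (theta : nat -> R) : nat -> R := fun j => cos (2 * theta j).

Definition dim (N : nat) : nat := (2 ^ N)%nat.
Definition bit (k j : nat) : bool := Nat.testbit k j.

Definition Vec : Type := nat -> Cx.
Definition Op : Type := nat -> nat -> Cx.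

Definition inner (N : nat) (v w : Vec) : Cx :=
  Csum (dim N) (fun k => Cmul (Cconj (v k)) (w k)).
Definition mm (N : nat) (A B : Op) : Op :=
  fun i j => Csum (dim N) (fun k => Cmul (A i k) (B k j)).
Definition apply (N : nat) (A : Op) (v : Vec) : Vec :=
  fun i => Csum (dim N) (fun k => Cmul (A i k) (v k)).
Definition opadd (A B : Op) : Op := fun i j => Cadd (A i j) (B i j).
Definition opscale (z : Cx) (A : Op) : Op := fun i j => Cmul z (A i j).
Definition opsum (n : nat) (F : nat -> Op) : Op := fun i j => Csum n (fun a => F a i j).
Definition outer (v w : Vec) : Op := fun i j => Cmul (v i) (Cconj (w j)).

Definition opeq (N : nat) (A B : Op) : Prop :=
  forall i j, (i < dim N)%nat -> (j < dim N)%nat -> A i j = B i j.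
Definition inRP (N : nat) (A P : Op) : Prop :=
  exists r : R, opeq N A (opscale (RtoC r) P).

Definition Iop : Op := fun i k => if Nat.eqb i k then Cone else Czero.
Definition Zop (j : nat) : Op :=
  fun i k => if Nat.eqb i k then (if bit i j then RtoC (-1) else Cone) else Czero.
Definition allflipped (N i k : nat) : bool :=
  forallb (fun j => Bool.eqb (bit i j) (negb (bit k j))) (seq 0 N).
Definition Xall (N : nat) : Op := fun i k => if allflipped N i k then Cone else Czero.
Definition dotZ (N : nat) (v : nat -> R) : Op :=
  opsum N (fun j => opscale (RtoC (v j)) (Zop j)).

Definition ket0L (N : nat) (theta : nat -> R) : Vec :=
  fun k => Cprod N (fun j => if bit k j then (0, sin (theta j)) else (cos (theta j), 0)).
Definition ket1L (N : nat) (theta : nat -> R) : Vec := apply N (Xall N) (ket0L N theta).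
Definition Pcode (N : nat) (theta : nat -> R) : Op :=
  opadd (outer (ket0L N theta) (ket0L N theta)) (outer (ket1L N theta) (ket1L N theta)).
Definition ZL (N : nat) (theta : nat -> R) : Op :=
  opadd (outer (ket0L N theta) (ket0L N theta))
        (opscale (RtoC (-1)) (outer (ket1L N theta) (ket1L N theta))).
Definition sandwich (N : nat) (P A : Op) : Op := mm N (mm N P A) P.

Definition DephasingData (N : nat) (C : nat -> nat -> R) (vs : nat -> nat -> R)
    (lam : nat -> R) : Prop :=
  (forall i j, (i < N)%nat -> (j < N)%nat -> C i j = C j i) /\
  (forall x : nat -> R, 0 <= Rdot N x (Rmatvec N C x)) /\
  (forall a b, (a < N)%nat -> (b < N)%nat ->
      Rdot N (vs a) (vs b) = if Nat.eqb a b then 1 else 0) /\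
  (forall a i, (a < N)%nat -> (i < N)%nat -> Rmatvec N C (vs a) i = lam a * vs a i) /\
  (forall a, (a < N)%nat -> 0 <= lam a).

Definition Lind (N : nat) (vs : nat -> nat -> R) (lam : nat -> R) (a : nat) : Op :=
  opscale (RtoC (sqrt (lam a))) (dotZ N (vs a)).

Definition inLindbladSpan (N : nat) (vs : nat -> nat -> R) (lam : nat -> R) (S : Op) : Prop :=
  exists (a0 : R) (b : nat -> R) (c : nat -> nat -> R),
    opeq N S
      (opadd (opscale (RtoC a0) Iop)
        (opadd (opsum N (fun a => opscale (RtoC (b a)) (Lind N vs lam a)))
               (opsum N (fun a => opsum N (fun a' =>
                   opscale (RtoC (c a a')) (mm N (Lind N vs lam a) (Lind N vs lam a'))))))).

Definition perp_col (N : nat) (w : nat -> R) (C : nat -> nat -> R) : Prop :=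
  forall x : nat -> R, Rdot N w (Rmatvec N C x) = 0.

Definition Ham (N : nat) (h : nat -> R) : Op := opscale (RtoC (1/2)) (dotZ N h).

(* Main.v *)
Require Import Defs.
From Stdlib Require Import Reals Lra Lia Arith List Ring FunctionalExtensionality.
Open Scope R_scope.
Definition Copp (z : Cx) : Cx := (- fst z, - snd z).
Definition Csub (z w : Cx) : Cx := Cadd z (Copp w).
Ltac Cdestr := repeat match goal with z : Cx |- _ => destruct z end.
Ltac Cfin := intros; Cdestr; unfold Csub, Copp, Cadd, Cmul, Cconj, RtoC, Czero, Cone in *; simpl; f_equal; ring.
Lemma Cring : ring_theory Czero Cone Cadd Cmul Csub Copp (@eq Cx).
Proof. constructor; Cfin. Qed.
Add Ring CxRing : Cring.

Lemma Cconj_mul a b : Cconj (Cmul a b) = Cmul (Cconj a) (Cconj b). Proof. Cfin. Qed.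
Lemma Cconj_add a b : Cconj (Cadd a b) = Cadd (Cconj a) (Cconj b). Proof. Cfin. Qed.
Lemma Cconj_RtoC r : Cconj (RtoC r) = RtoC r. Proof. unfold Cconj, RtoC; simpl; f_equal; ring. Qed.
Lemma Cconj_one : Cconj Cone = Cone. Proof. unfold Cconj, Cone; simpl; f_equal; ring. Qed.
Lemma RtoC_add a b : RtoC (a + b) = Cadd (RtoC a) (RtoC b). Proof. unfold Cadd, RtoC; simpl; f_equal; ring. Qed.
Lemma RtoC_mul a b : RtoC (a * b) = Cmul (RtoC a) (RtoC b). Proof. unfold Cmul, RtoC; simpl; f_equal; ring. Qed.
Lemma RtoC_opp a : RtoC (- a) = Copp (RtoC a). Proof. unfold Copp, RtoC; simpl; f_equal; ring. Qed.
Lemma RtoC_0 : RtoC 0 = Czero. Proof. reflexivity. Qed.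
Lemma RtoC_1 : RtoC 1 = Cone. Proof. reflexivity. Qed.

Lemma Csum_ext n f g : (forall k, (k < n)%nat -> f k = g k) -> Csum n f = Csum n g.
Proof. induction n; intros H; simpl; auto. rewrite IHn by (intros; apply H; lia). rewrite H by lia. auto. Qed.
Lemma Csum_add n f g : Csum n (fun k => Cadd (f k) (g k)) = Cadd (Csum n f) (Csum n g).
Proof. induction n; simpl. unfold Czero, Cadd; simpl; f_equal; ring. rewrite IHn; ring. Qed.
Lemma Csum_scal n c f : Csum n (fun k => Cmul c (f k)) = Cmul c (Csum n f).
Proof. induction n; simpl. unfold Czero, Cmul; simpl; f_equal; ring. rewrite IHn; ring. Qed.
Lemma Csum_zero n f : (forall k, (k < n)%nat -> f k = Czero) -> Csum n f = Czero.
Proof. induction n; intros H; simpl; auto. rewrite IHn by (intros; apply H; lia). rewrite H by lia. ring. Qed.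
Lemma Csum_delta n i f : (i < n)%nat -> (forall k, (k < n)%nat -> k <> i -> f k = Czero) -> Csum n f = f i.
Proof. induction n; intros Hi H; [lia|]. simpl. destruct (Nat.eq_dec i n).
- subst. rewrite Csum_zero by (intros; apply H; lia). ring.
- rewrite IHn by (try lia; intros; apply H; lia). rewrite (H n) by lia. ring. Qed.
Lemma Csum_swap n m (f : nat -> nat -> Cx) :
  Csum n (fun a => Csum m (fun b => f a b)) = Csum m (fun b => Csum n (fun a => f a b)).
Proof. induction n; simpl. rewrite Csum_zero; auto. rewrite IHn, Csum_add. auto. Qed.
Lemma Csum_app n m f : Csum (n + m) f = Cadd (Csum n f) (Csum m (fun k => f (n + k)%nat)).
Proof. induction m; simpl. rewrite Nat.add_0_r; ring. rewrite Nat.add_succ_r; simpl. rewrite IHm; ring. Qed.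
Lemma Csum_mulr n f c : Cmul (Csum n f) c = Csum n (fun a => Cmul (f a) c).
Proof. induction n; simpl. ring. rewrite <- IHn; ring. Qed.
Lemma Csum_mul n m f g : Cmul (Csum n f) (Csum m g) = Csum n (fun a => Csum m (fun b => Cmul (f a) (g b))).
Proof. rewrite Csum_mulr. apply Csum_ext; intros. rewrite <- Csum_scal. auto. Qed.
Lemma Csum_RtoC n f : Csum n (fun k => RtoC (f k)) = RtoC (Rsum n f).
Proof. induction n; simpl; auto. rewrite IHn, RtoC_add; auto. Qed.

Lemma Cprod_ext n f g : (forall k, (k < n)%nat -> f k = g k) -> Cprod n f = Cprod n g.
Proof. induction n; intros H; simpl; auto. rewrite IHn by (intros; apply H; lia). rewrite H by lia. auto. Qed.
Lemma Cprod_mul n f g : Cprod n (fun k => Cmul (f k) (g k)) = Cmul (Cprod n f) (Cprod n g).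
Proof. induction n; simpl. ring. rewrite IHn; ring. Qed.
Lemma Cconj_Cprod n f : Cconj (Cprod n f) = Cprod n (fun k => Cconj (f k)).
Proof. induction n; simpl. apply Cconj_one. rewrite Cconj_mul, IHn; auto. Qed.
Lemma Cprod_one n f : (forall k, (k < n)%nat -> f k = Cone) -> Cprod n f = Cone.
Proof. induction n; intros H; simpl; auto. rewrite IHn by (intros; apply H; lia). rewrite H by lia. ring. Qed.
Lemma Cprod_zero n f l : (l < n)%nat -> f l = Czero -> Cprod n f = Czero.
Proof. induction n; intros Hl H; [lia|]. simpl. destruct (Nat.eq_dec l n).
- subst. rewrite H; ring.
- rewrite IHn by (auto; lia). ring. Qed.
Lemma Cprod_single n f j : (j < n)%nat -> (forall k, (k < n)%nat -> k <> j -> f k = Cone) -> Cprod n f = f j.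
Proof. induction n; intros Hj H; [lia|]. simpl. destruct (Nat.eq_dec j n).
- subst. rewrite Cprod_one by (intros; apply H; lia). ring.
- rewrite IHn by (try lia; intros; apply H; lia). rewrite (H n) by lia. ring. Qed.

Lemma bit_low k N : (k < 2 ^ N)%nat -> bit k N = false.
Proof. intros H. unfold bit. rewrite <- (Nat.mod_small k (2^N)) by auto. apply Nat.mod_pow2_bits_high; lia. Qed.
Lemma bit_shift k N j : (k < 2 ^ N)%nat -> (j < N)%nat -> bit (2 ^ N + k) j = bit k j.
Proof. intros H Hj. unfold bit. rewrite <- Nat.mod_pow2_bits_low with (n := N) by auto.
  replace ((2^N + k) mod 2^N)%nat with k; auto.
  rewrite Nat.add_comm. replace (k + 2^N)%nat with (k + 1 * 2^N)%nat by lia.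
  rewrite Nat.Div0.mod_add. rewrite Nat.mod_small; auto. Qed.
Lemma bit_top k N : (k < 2 ^ N)%nat -> bit (2 ^ N + k) N = true.
Proof. intros H. unfold bit. replace N with (0 + N)%nat at 2 by lia. rewrite <- Nat.div_pow2_bits.
  replace ((2^N + k) / 2^N)%nat with 1%nat; auto.
  rewrite Nat.add_comm. replace (k + 2^N)%nat with (k + 1 * 2^N)%nat by lia.
  rewrite Nat.div_add. rewrite Nat.div_small; auto. apply Nat.pow_nonzero; lia. Qed.

Lemma dim_S N : dim (S N) = (dim N + dim N)%nat. Proof. unfold dim; simpl; lia. Qed.

Lemma sum_prod_bits N (f : nat -> bool -> Cx) :
  Csum (dim N) (fun k => Cprod N (fun j => f j (bit k j))) = Cprod N (fun j => Cadd (f j false) (f j true)).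
Proof. induction N; simpl. unfold dim; simpl. ring.
  rewrite dim_S, Csum_app. 
  rewrite (Csum_ext _ _ (fun k => Cmul (Cprod N (fun j => f j (bit k j))) (f N false))).
  2:{ intros k Hk. simpl. rewrite bit_low by exact Hk. auto. }
  rewrite (Csum_ext _ (fun k => Cprod (S N) (fun j => f j (bit (dim N + k) j))) (fun k => Cmul (Cprod N (fun j => f j (bit k j))) (f N true))).
  2:{ intros k Hk. simpl. unfold dim in *. rewrite bit_top by exact Hk. f_equal. apply Cprod_ext. intros; rewrite bit_shift; auto. }
  rewrite <- !Csum_mulr, IHN. ring. Qed.
Definition amp (theta : nat -> R) (l : nat) (b : bool) : Cx :=
  if b then (0, sin (theta l)) else (cos (theta l), 0).
Lemma forallb_prod N p : (if forallb p (seq 0 N) then Cone else Czero) = Cprod N (fun j => if p j then Cone else Czero).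
Proof. induction N; [simpl; auto|]. rewrite seq_S, forallb_app. cbn [Cprod forallb]. rewrite <- IHN. rewrite Bool.andb_true_r.
  simpl; destruct (forallb p (seq 0 N)), (p N); simpl; ring. Qed.
Lemma ket1_eq N theta k : (k < dim N)%nat -> ket1L N theta k = Cprod N (fun l => amp theta l (negb (bit k l))).
Proof. intros Hk. unfold ket1L, apply, Xall, allflipped.
  rewrite (Csum_ext _ _ (fun m => Cprod N (fun j => Cmul (if Bool.eqb (bit k j) (negb (bit m j)) then Cone else Czero) (amp theta j (bit m j))))).
  2:{ intros m Hm. rewrite Cprod_mul, forallb_prod. reflexivity. }
  refine (eq_trans (sum_prod_bits N (fun j b => Cmul (if Bool.eqb (bit k j) (negb b) then Cone else Czero) (amp theta j b))) _).
  apply Cprod_ext. intros l Hl. destruct (bit k l); simpl; ring. Qed.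

Definition zsel (N : nat) (sel : nat -> bool) (k : nat) : Cx :=
  Cprod N (fun l => if andb (sel l) (bit k l) then RtoC (-1) else Cone).
Definition matel (N : nat) (d : nat -> Cx) (x y : Vec) : Cx :=
  Csum (dim N) (fun k => Cmul (Cconj (x k)) (Cmul (d k) (y k))).
Lemma matel_ext N d1 d2 x y : (forall k, (k < dim N)%nat -> d1 k = d2 k) -> matel N d1 x y = matel N d2 x y.
Proof. intros H; unfold matel; apply Csum_ext; intros; rewrite H; auto. Qed.
Lemma matel_extv N d x1 x2 y1 y2 : (forall k, (k < dim N)%nat -> x1 k = x2 k) -> (forall k, (k < dim N)%nat -> y1 k = y2 k) -> matel N d x1 y1 = matel N d x2 y2.
Proof. intros H1 H2; unfold matel; apply Csum_ext; intros; rewrite H1, H2; auto. Qed.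

Lemma matel_prod N sel xa ya :
  matel N (zsel N sel) (fun k => Cprod N (fun l => xa l (bit k l))) (fun k => Cprod N (fun l => ya l (bit k l)))
  = Cprod N (fun l => Cadd (Cmul (Cconj (xa l false)) (Cmul (if andb (sel l) false then RtoC (-1) else Cone) (ya l false)))
                          (Cmul (Cconj (xa l true)) (Cmul (if andb (sel l) true then RtoC (-1) else Cone) (ya l true)))).
Proof. unfold matel, zsel. refine (eq_trans _ (sum_prod_bits N (fun l b => Cmul (Cconj (xa l b)) (Cmul (if andb (sel l) b then RtoC (-1) else Cone) (ya l b))))).
  apply Csum_ext; intros k Hk.
  rewrite Cconj_Cprod, <- !Cprod_mul. auto. Qed.

Ltac Cpair := unfold Csub, Copp, Cadd, Cmul, Cconj, RtoC, Czero, Cone, amp in *; simpl; f_equal.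

Lemma matel00 N theta sel : matel N (zsel N sel) (ket0L N theta) (ket0L N theta) =
  Cprod N (fun l => if sel l then RtoC (cos (2 * theta l)) else Cone).
Proof. unfold ket0L. refine (eq_trans (matel_prod N sel (amp theta) (amp theta)) _).
  apply Cprod_ext; intros l _. pose proof (sin2_cos2 (theta l)). rewrite cos_2a.
  destruct (sel l); simpl; Cpair; unfold Rsqr in *; nra. Qed.
Lemma matel11 N theta sel : matel N (zsel N sel) (ket1L N theta) (ket1L N theta) =
  Cprod N (fun l => if sel l then RtoC (- cos (2 * theta l)) else Cone).
Proof. rewrite (matel_extv N _ _ (fun k => Cprod N (fun l => amp theta l (negb (bit k l)))) _ (fun k => Cprod N (fun l => amp theta l (negb (bit k l))))) by (intros; apply ket1_eq; auto).
  refine (eq_trans (matel_prod N sel (fun l b => amp theta l (negb b)) (fun l b => amp theta l (negb b))) _).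
  apply Cprod_ext; intros l _. pose proof (sin2_cos2 (theta l)). rewrite cos_2a.
  destruct (sel l); simpl; Cpair; unfold Rsqr in *; nra. Qed.
Lemma matel01 N theta sel l0 : (l0 < N)%nat -> sel l0 = false -> matel N (zsel N sel) (ket0L N theta) (ket1L N theta) = Czero.
Proof. intros Hl Hs. rewrite (matel_extv N _ _ (ket0L N theta) _ (fun k => Cprod N (fun l => amp theta l (negb (bit k l))))) by (intros; auto; apply ket1_eq; auto).
  unfold ket0L. refine (eq_trans (matel_prod N sel (amp theta) (fun l b => amp theta l (negb b))) _).
  apply (Cprod_zero _ _ l0 Hl). rewrite Hs. simpl. Cpair; ring. Qed.
Lemma matel10 N theta sel l0 : (l0 < N)%nat -> sel l0 = false -> matel N (zsel N sel) (ket1L N theta) (ket0L N theta) = Czero.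
Proof. intros Hl Hs. rewrite (matel_extv N _ _ (fun k => Cprod N (fun l => amp theta l (negb (bit k l)))) _ (ket0L N theta)) by (intros; auto; apply ket1_eq; auto).
  unfold ket0L. refine (eq_trans (matel_prod N sel (fun l b => amp theta l (negb b)) (amp theta)) _).
  apply (Cprod_zero _ _ l0 Hl). rewrite Hs. simpl. Cpair; ring. Qed.

Definition zs (j k : nat) : Cx := if bit k j then RtoC (-1) else Cone.
Lemma zs_sel N j k : (j < N)%nat -> zs j k = zsel N (fun l => Nat.eqb l j) k.
Proof. intros Hj. unfold zsel. rewrite (Cprod_single N _ j Hj).
  - rewrite Nat.eqb_refl. reflexivity.
  - intros l _ Hl. apply Nat.eqb_neq in Hl. rewrite Hl. reflexivity. Qed.
Lemma Cprod_double n f j l : (j < n)%nat -> (l < n)%nat -> j <> l ->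
  (forall m, (m < n)%nat -> m <> j -> m <> l -> f m = Cone) -> Cprod n f = Cmul (f j) (f l).
Proof. intros Hj Hl Hjl H.
  rewrite (Cprod_ext n f (fun m => Cmul (if Nat.eqb m j then f j else Cone) (if Nat.eqb m l then f l else Cone))).
  - rewrite Cprod_mul. rewrite (Cprod_single n _ j Hj), (Cprod_single n _ l Hl); rewrite ?Nat.eqb_refl; auto.
    + intros m _ Hm; apply Nat.eqb_neq in Hm; rewrite Hm; auto.
    + intros m _ Hm; apply Nat.eqb_neq in Hm; rewrite Hm; auto.
  - intros m Hm. destruct (Nat.eq_dec m j); [subst; rewrite Nat.eqb_refl; apply Nat.eqb_neq in Hjl; rewrite Hjl; ring|].
    destruct (Nat.eq_dec m l); [subst; rewrite Nat.eqb_refl; apply Nat.eqb_neq in n0; rewrite n0; ring|].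
    rewrite H by auto. apply Nat.eqb_neq in n0. apply Nat.eqb_neq in n1. rewrite n0, n1. ring. Qed.
Lemma zs2_sel N j l k : (j < N)%nat -> (l < N)%nat -> Cmul (zs j k) (zs l k) = zsel N (fun m => xorb (Nat.eqb m j) (Nat.eqb m l)) k.
Proof. intros Hj Hl. rewrite (zs_sel N j k Hj), (zs_sel N l k Hl). unfold zsel. rewrite <- Cprod_mul.
  apply Cprod_ext. intros m _. destruct (Nat.eqb m j), (Nat.eqb m l), (bit k m); simpl; Cpair; ring. Qed.

Definition Good (N : nat) (theta : nat -> R) (d : nat -> Cx) : Prop :=
  (exists r, matel N d (ket0L N theta) (ket0L N theta) = RtoC r) /\
  matel N d (ket0L N theta) (ket0L N theta) = matel N d (ket1L N theta) (ket1L N theta) /\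
  matel N d (ket0L N theta) (ket1L N theta) = Czero /\
  matel N d (ket1L N theta) (ket0L N theta) = Czero.
Definition ZGood (N : nat) (theta : nat -> R) (d : nat -> Cx) (r : R) : Prop :=
  matel N d (ket0L N theta) (ket0L N theta) = RtoC r /\
  matel N d (ket1L N theta) (ket1L N theta) = RtoC (- r) /\
  matel N d (ket0L N theta) (ket1L N theta) = Czero /\
  matel N d (ket1L N theta) (ket0L N theta) = Czero.

Lemma matel_add N d1 d2 x y : matel N (fun k => Cadd (d1 k) (d2 k)) x y = Cadd (matel N d1 x y) (matel N d2 x y).
Proof. unfold matel. rewrite <- Csum_add. apply Csum_ext; intros; ring. Qed.
Lemma matel_scal N c d x y : matel N (fun k => Cmul c (d k)) x y = Cmul c (matel N d x y).
Proof. unfold matel. rewrite <- Csum_scal. apply Csum_ext; intros; ring. Qed.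
Lemma matel_zero N x y : matel N (fun _ => Czero) x y = Czero.
Proof. unfold matel. apply Csum_zero; intros; ring. Qed.

Lemma Good_ext N theta d1 d2 : (forall k, (k < dim N)%nat -> d1 k = d2 k) -> Good N theta d1 -> Good N theta d2.
Proof. intros H G. unfold Good in *. rewrite !(matel_ext N d2 d1) by (intros; symmetry; auto). auto. Qed.
Lemma Good_add N theta d1 d2 : Good N theta d1 -> Good N theta d2 -> Good N theta (fun k => Cadd (d1 k) (d2 k)).
Proof. intros [[r1 H1] [E1 [Z1 Y1]]] [[r2 H2] [E2 [Z2 Y2]]]. unfold Good. rewrite !matel_add.
  rewrite <- E1, <- E2, Z1, Z2, Y1, Y2, H1, H2. repeat split; try ring. exists (r1 + r2). rewrite RtoC_add; auto. Qed.
Lemma Good_scal N theta c d : Good N theta d -> Good N theta (fun k => Cmul (RtoC c) (d k)).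
Proof. intros [[r1 H1] [E1 [Z1 Y1]]]. unfold Good. rewrite !matel_scal.
  rewrite <- E1, Z1, Y1, H1. repeat split; try ring. exists (c * r1). rewrite RtoC_mul; auto. Qed.
Lemma Good_zero N theta : Good N theta (fun _ => Czero).
Proof. unfold Good. rewrite !matel_zero. repeat split; auto. exists 0; auto. Qed.
Lemma Good_sum N theta n F : (forall a, (a < n)%nat -> Good N theta (F a)) -> Good N theta (fun k => Csum n (fun a => F a k)).
Proof. induction n; intros H; simpl. apply Good_zero.
  apply (Good_add N theta (fun k => Csum n (fun a => F a k)) (F n)); auto. Qed.

Lemma ZGood_ext N theta d1 d2 r : (forall k, (k < dim N)%nat -> d1 k = d2 k) -> ZGood N theta d1 r -> ZGood N theta d2 r.
Proof. intros H G. unfold ZGood in *. rewrite !(matel_ext N d2 d1) by (intros; symmetry; auto). auto. Qed.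
Lemma ZGood_scal N theta c d r : ZGood N theta d r -> ZGood N theta (fun k => Cmul (RtoC c) (d k)) (c * r).
Proof. intros [H1 [H2 [Z1 Y1]]]. unfold ZGood. rewrite !matel_scal, H1, H2, Z1, Y1.
  rewrite !RtoC_mul, !RtoC_opp, RtoC_mul. repeat split; ring. Qed.
Lemma ZGood_Good N theta d r : ZGood N theta d r -> r = 0 -> Good N theta d.
Proof. intros [H1 [H2 [Z1 Y1]]] ->. unfold Good. rewrite H1, H2, Z1, Y1. repeat split; auto. exists 0; auto.
  f_equal; ring. Qed.
Lemma ZGood_sum N theta n (v : nat -> R) F r : (forall a, (a < n)%nat -> ZGood N theta (F a) (r a)) ->
  ZGood N theta (fun k => Csum n (fun a => Cmul (RtoC (v a)) (F a k))) (Rsum n (fun a => v a * r a)).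
Proof. induction n; intros H; simpl.
  - unfold ZGood. rewrite !matel_zero. repeat split; auto. unfold RtoC, Czero; f_equal; ring.
  - destruct (IHn (fun a Ha => H a (Nat.lt_lt_succ_r _ _ Ha))) as [H1 [H2 [Z1 Y1]]].
    destruct (ZGood_scal N theta (v n) (F n) (r n) (H n (Nat.lt_succ_diag_r n))) as [K1 [K2 [W1 X1]]].
    unfold ZGood. rewrite !matel_add. rewrite H1, H2, Z1, Y1, K1, K2, W1, X1.
    repeat split; Cpair; ring. Qed.

Lemma Cone_zsel N k : Cone = zsel N (fun _ => false) k.
Proof. unfold zsel. symmetry; apply Cprod_one. intros; reflexivity. Qed.
Lemma matel_one00 N theta : matel N (fun _ => Cone) (ket0L N theta) (ket0L N theta) = Cone.
Proof. rewrite (matel_ext N _ (zsel N (fun _ => false))) by (intros; apply Cone_zsel).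
  rewrite matel00. apply Cprod_one. auto. Qed.
Lemma matel_one11 N theta : matel N (fun _ => Cone) (ket1L N theta) (ket1L N theta) = Cone.
Proof. rewrite (matel_ext N _ (zsel N (fun _ => false))) by (intros; apply Cone_zsel).
  rewrite matel11. apply Cprod_one. auto. Qed.
Lemma matel_one01 N theta : (1 <= N)%nat -> matel N (fun _ => Cone) (ket0L N theta) (ket1L N theta) = Czero.
Proof. intros. rewrite (matel_ext N _ (zsel N (fun _ => false))) by (intros; apply Cone_zsel).
  apply (matel01 N theta _ 0); auto. Qed.
Lemma matel_one10 N theta : (1 <= N)%nat -> matel N (fun _ => Cone) (ket1L N theta) (ket0L N theta) = Czero.
Proof. intros. rewrite (matel_ext N _ (zsel N (fun _ => false))) by (intros; apply Cone_zsel).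
  apply (matel10 N theta _ 0); auto. Qed.
Lemma Good_one N theta : (1 <= N)%nat -> Good N theta (fun _ => Cone).
Proof. intros. unfold Good. rewrite matel_one00, matel_one11, matel_one01, matel_one10; auto. repeat split; auto. exists 1; auto. Qed.

Lemma ZGood_zs N theta j : (2 <= N)%nat -> (j < N)%nat -> ZGood N theta (zs j) (cos (2 * theta j)).
Proof. intros HN Hj. apply (ZGood_ext N theta (zsel N (fun l => Nat.eqb l j))); [intros; symmetry; apply zs_sel; auto|].
  set (l0 := if Nat.eqb j 0 then 1%nat else 0%nat).
  assert (Hl0 : (l0 < N)%nat /\ Nat.eqb l0 j = false).
  { unfold l0; destruct (Nat.eqb j 0) eqn:E; apply Nat.eqb_eq in E || apply Nat.eqb_neq in E; split; try lia; apply Nat.eqb_neq; lia. }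
  destruct Hl0 as [Hl0 Hs].
  unfold ZGood. rewrite matel00, matel11, (matel01 N theta _ l0), (matel10 N theta _ l0); auto.
  rewrite (Cprod_single N _ j Hj), (Cprod_single N (fun l => if Nat.eqb l j then RtoC (- cos (2 * theta l)) else Cone) j Hj);
   rewrite ?Nat.eqb_refl; auto.
  - intros l _ Hl; apply Nat.eqb_neq in Hl; rewrite Hl; auto.
  - intros l _ Hl; apply Nat.eqb_neq in Hl; rewrite Hl; auto. Qed.

Lemma Good_zs2 N theta j l : (3 <= N)%nat -> (j < N)%nat -> (l < N)%nat -> Good N theta (fun k => Cmul (zs j k) (zs l k)).
Proof. intros HN Hj Hl. apply (Good_ext N theta (zsel N (fun m => xorb (Nat.eqb m j) (Nat.eqb m l)))); [intros; symmetry; apply zs2_sel; auto|].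
  assert (Hl0 : exists l0, (l0 < N)%nat /\ xorb (Nat.eqb l0 j) (Nat.eqb l0 l) = false).
  { destruct (Nat.eq_dec j l).
    - subst. exists 0%nat. split; [lia|]. destruct (Nat.eqb 0 l); auto.
    - assert (exists l0, l0 < 3 /\ l0 <> j /\ l0 <> l)%nat as [l0 [A [B C]]].
      { destruct (Nat.eq_dec j 0), (Nat.eq_dec l 0), (Nat.eq_dec j 1), (Nat.eq_dec l 1);
        try (exists 2%nat; lia); try (exists 1%nat; lia); try (exists 0%nat; lia). }
      exists l0. split; [lia|]. apply Nat.eqb_neq in B. apply Nat.eqb_neq in C. rewrite B, C; auto. }
  destruct Hl0 as [l0 [Hl0 Hs]].
  unfold Good. rewrite matel00, matel11, (matel01 N theta _ l0), (matel10 N theta _ l0); auto.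
  destruct (Nat.eq_dec j l).
  - subst. rewrite !Cprod_one; [repeat split; auto; exists 1; auto | |];
      intros m _; destruct (Nat.eqb m l); simpl; auto.
  - rewrite (Cprod_double N _ j l), (Cprod_double N (fun m => if xorb (Nat.eqb m j) (Nat.eqb m l) then RtoC (- cos (2 * theta m)) else Cone) j l); auto.
    + assert (E: Nat.eqb j l = false) by (apply Nat.eqb_neq; auto).
      assert (E': Nat.eqb l j = false) by (apply Nat.eqb_neq; auto). rewrite !Nat.eqb_refl, E, E'. simpl.
      repeat split; auto. exists (cos (2 * theta j) * cos (2 * theta l)). rewrite RtoC_mul; auto.
      Cpair; ring.
    + intros m _ A B. apply Nat.eqb_neq in A. apply Nat.eqb_neq in B. rewrite A, B; auto.
    + intros m _ A B. apply Nat.eqb_neq in A. apply Nat.eqb_neq in B. rewrite A, B; auto. Qed.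

Definition Dv (N : nat) (w : nat -> R) (k : nat) : Cx := Csum N (fun j => Cmul (RtoC (w j)) (zs j k)).
Lemma ZGood_Dv N theta w : (2 <= N)%nat -> ZGood N theta (Dv N w) (Rdot N w (cos2theta theta)).
Proof. intros HN. exact (ZGood_sum N theta N w zs (fun j => cos (2 * theta j)) (fun a Ha => ZGood_zs N theta a HN Ha)). Qed.
Lemma Good_DvDv N theta w u : (3 <= N)%nat -> Good N theta (fun k => Cmul (Dv N w k) (Dv N u k)).
Proof. intros HN.
  apply (Good_ext N theta (fun k => Csum N (fun j => Csum N (fun l => Cmul (RtoC (w j * u l)) (Cmul (zs j k) (zs l k)))))).
  { intros k _. unfold Dv. rewrite Csum_mul. apply Csum_ext; intros; apply Csum_ext; intros. rewrite RtoC_mul; ring. }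
  apply (Good_sum N theta N (fun j k => Csum N (fun l => Cmul (RtoC (w j * u l)) (Cmul (zs j k) (zs l k))))).
  intros a Ha. apply (Good_sum N theta N (fun l k => Cmul (RtoC (w a * u l)) (Cmul (zs a k) (zs l k)))).
  intros b Hb. apply (Good_scal N theta _ (fun k => Cmul (zs a k) (zs b k))). apply Good_zs2; auto. Qed.

Definition DiagOn (N : nat) (A : Op) (d : nat -> Cx) : Prop :=
  forall i k, (i < dim N)%nat -> (k < dim N)%nat -> A i k = if Nat.eqb i k then d i else Czero.
Lemma DiagOn_opeq N S T d : opeq N S T -> DiagOn N T d -> DiagOn N S d.
Proof. intros H D i k Hi Hk. rewrite H; auto. Qed.
Lemma DiagOn_add N A B d1 d2 : DiagOn N A d1 -> DiagOn N B d2 -> DiagOn N (opadd A B) (fun k => Cadd (d1 k) (d2 k)).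
Proof. intros H1 H2 i k Hi Hk. unfold opadd. rewrite H1, H2 by auto. destruct (Nat.eqb i k); ring. Qed.
Lemma DiagOn_scale N z A d : DiagOn N A d -> DiagOn N (opscale z A) (fun k => Cmul z (d k)).
Proof. intros H1 i k Hi Hk. unfold opscale. rewrite H1 by auto. destruct (Nat.eqb i k); ring. Qed.
Lemma DiagOn_sum N n F D : (forall a, (a < n)%nat -> DiagOn N (F a) (D a)) -> DiagOn N (opsum n F) (fun k => Csum n (fun a => D a k)).
Proof. intros H i k Hi Hk. unfold opsum. destruct (Nat.eqb i k) eqn:E.
  - apply Csum_ext. intros a Ha. rewrite H, E; auto.
  - apply Csum_zero. intros a Ha. rewrite H, E; auto. Qed.
Lemma DiagOn_I N : DiagOn N Iop (fun _ => Cone).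
Proof. intros i k _ _. reflexivity. Qed.
Lemma DiagOn_mm N A B d1 d2 : DiagOn N A d1 -> DiagOn N B d2 -> DiagOn N (mm N A B) (fun k => Cmul (d1 k) (d2 k)).
Proof. intros H1 H2 i k Hi Hk. unfold mm. rewrite (Csum_delta _ i) by (auto; intros m Hm Hne; rewrite H1 by auto;
    apply Nat.eqb_neq in Hne; rewrite Nat.eqb_sym, Hne; ring).
  rewrite H1, H2 by auto. rewrite Nat.eqb_refl. destruct (Nat.eqb i k) eqn:E; [apply Nat.eqb_eq in E; subst|]; ring. Qed.
Lemma DiagOn_dotZ N w : DiagOn N (dotZ N w) (Dv N w).
Proof. intros i k Hi Hk. unfold dotZ, opsum, opscale, Zop, Dv, zs. destruct (Nat.eqb i k) eqn:E.
  - apply Nat.eqb_eq in E; subst. apply Csum_ext; intros; auto.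
  - apply Csum_zero; intros; ring. Qed.

Lemma sandwich_diag N x0 x1 A d i j : DiagOn N A d -> (i < dim N)%nat -> (j < dim N)%nat ->
  sandwich N (opadd (outer x0 x0) (outer x1 x1)) A i j =
  Cadd (Cadd (Cadd (Cmul (Cmul (x0 i) (matel N d x0 x0)) (Cconj (x0 j)))
                   (Cmul (Cmul (x0 i) (matel N d x0 x1)) (Cconj (x1 j))))
             (Cmul (Cmul (x1 i) (matel N d x1 x0)) (Cconj (x0 j))))
       (Cmul (Cmul (x1 i) (matel N d x1 x1)) (Cconj (x1 j))).
Proof. intros HA Hi Hj. unfold sandwich. unfold mm at 1.
  set (P := opadd (outer x0 x0) (outer x1 x1)).
  rewrite (Csum_ext _ _ (fun k => Cmul (Cmul (P i k) (d k)) (P k j))).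
  2:{ intros k Hk. f_equal. unfold mm. rewrite (Csum_delta _ k) by (auto; intros m Hm Hne; rewrite HA by auto;
       apply Nat.eqb_neq in Hne; rewrite Hne; ring). rewrite HA, Nat.eqb_refl by auto. auto. }
  unfold P, opadd, outer, matel.
  rewrite (Csum_ext _ _ (fun k =>
    Cadd (Cadd (Cadd (Cmul (Cmul (x0 i) (Cconj (x0 j))) (Cmul (Cconj (x0 k)) (Cmul (d k) (x0 k))))
                     (Cmul (Cmul (x0 i) (Cconj (x1 j))) (Cmul (Cconj (x0 k)) (Cmul (d k) (x1 k)))))
               (Cmul (Cmul (x1 i) (Cconj (x0 j))) (Cmul (Cconj (x1 k)) (Cmul (d k) (x0 k)))))
         (Cmul (Cmul (x1 i) (Cconj (x1 j))) (Cmul (Cconj (x1 k)) (Cmul (d k) (x1 k)))))) by (intros; ring).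
  rewrite !Csum_add, !Csum_scal. ring. Qed.

Lemma Good_sandwich N theta A d : DiagOn N A d -> Good N theta d -> inRP N (sandwich N (Pcode N theta) A) (Pcode N theta).
Proof. intros HA [[r H1] [E [Z Y]]]. exists r. intros i j Hi Hj. unfold Pcode.
  rewrite (sandwich_diag N _ _ A d i j HA Hi Hj). rewrite <- E, Z, Y, H1.
  unfold opscale, opadd, outer. ring. Qed.
Lemma ZGood_sandwich N theta A d r : DiagOn N A d -> ZGood N theta d r ->
  opeq N (sandwich N (Pcode N theta) A) (opscale (RtoC r) (ZL N theta)).
Proof. intros HA [H1 [H2 [Z Y]]]. intros i j Hi Hj. unfold Pcode.
  rewrite (sandwich_diag N _ _ A d i j HA Hi Hj). rewrite H1, H2, Z, Y.
  unfold opscale, ZL, opadd, outer. rewrite !RtoC_opp. Cpair; ring. Qed.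

Lemma Rsum_ext n f g : (forall k, (k < n)%nat -> f k = g k) -> Rsum n f = Rsum n g.
Proof. induction n; intros H; simpl; auto. rewrite IHn by (intros; apply H; lia). rewrite H by lia. auto. Qed.
Lemma Rsum_scal n c f : Rsum n (fun k => c * f k) = c * Rsum n f.
Proof. induction n; simpl. ring. rewrite IHn; ring. Qed.

Lemma perp_lemma N C vs lam theta a : DephasingData N C vs lam -> perp_col N (cos2theta theta) C -> (a < N)%nat ->
  sqrt (lam a) * Rdot N (vs a) (cos2theta theta) = 0.
Proof. intros [_ [_ [_ [Heig _]]]] Hp Ha. specialize (Hp (vs a)). unfold Rdot in *.
  rewrite (Rsum_ext _ _ (fun j => lam a * (vs a j * cos2theta theta j))) in Hp by (intros; rewrite Heig by auto; ring).
  rewrite Rsum_scal in Hp. destruct (Rmult_integral _ _ Hp) as [E|E]; rewrite E; [rewrite sqrt_0|]; ring. Qed.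

Theorem mainTheorem3 (N : nat) (theta : nat -> R) (HN : (3 <= N)%nat) :
  (inner N (ket0L N theta) (ket0L N theta) = Cone /\
   inner N (ket1L N theta) (ket1L N theta) = Cone /\
   inner N (ket0L N theta) (ket1L N theta) = Czero) /\
  (forall v u : nat -> R,
     opeq N (sandwich N (Pcode N theta) (dotZ N v))
            (opscale (RtoC (Rdot N v (cos2theta theta))) (ZL N theta)) /\
     inRP N (sandwich N (Pcode N theta) (mm N (dotZ N v) (dotZ N u))) (Pcode N theta)) /\
  (forall (h : nat -> R) (C : nat -> nat -> R) (vs : nat -> nat -> R) (lam : nat -> R),
     DephasingData N C vs lam ->
     perp_col N (cos2theta theta) C ->
     (forall S : Op, inLindbladSpan N vs lam S ->
        inRP N (sandwich N (Pcode N theta) S) (Pcode N theta)) /\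
     opeq N (sandwich N (Pcode N theta) (Ham N h))
            (opscale (RtoC (1/2 * Rdot N h (cos2theta theta))) (ZL N theta))).
Proof.
  assert (Hin : forall x y, inner N x y = matel N (fun _ => Cone) x y).
  { intros; unfold inner, matel; apply Csum_ext; intros; ring. }
  split; [|split].
  - rewrite !Hin, matel_one00, matel_one11, matel_one01 by lia. auto.
  - intros v u; split.
    + apply (ZGood_sandwich N theta _ (Dv N v)). apply DiagOn_dotZ. apply ZGood_Dv; lia.
    + apply (Good_sandwich N theta _ (fun k => Cmul (Dv N v k) (Dv N u k))).
      apply DiagOn_mm; apply DiagOn_dotZ. apply Good_DvDv; lia.
  - intros h C vs lam HD Hp. split.
    + intros S [a0 [b [c HS]]].
      set (dL := fun a k => Cmul (RtoC (sqrt (lam a))) (Dv N (vs a) k)).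
      assert (HL : forall a, DiagOn N (Lind N vs lam a) (dL a)).
      { intros a. apply DiagOn_scale, DiagOn_dotZ. }
      apply (Good_sandwich N theta S (fun k => Cadd (Cmul (RtoC a0) Cone)
          (Cadd (Csum N (fun a => Cmul (RtoC (b a)) (dL a k)))
                (Csum N (fun a => Csum N (fun a' => Cmul (RtoC (c a a')) (Cmul (dL a k) (dL a' k)))))))).
      * eapply DiagOn_opeq; [exact HS|]. apply DiagOn_add. apply DiagOn_scale, DiagOn_I.
        apply DiagOn_add.
        -- apply (DiagOn_sum N N _ (fun a k => Cmul (RtoC (b a)) (dL a k))). intros; apply DiagOn_scale, HL.
        -- apply (DiagOn_sum N N _ (fun a k => Csum N (fun a' => Cmul (RtoC (c a a')) (Cmul (dL a k) (dL a' k))))).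
           intros a _. apply (DiagOn_sum N N _ (fun a' k => Cmul (RtoC (c a a')) (Cmul (dL a k) (dL a' k)))).
           intros a' _. apply DiagOn_scale, DiagOn_mm; apply HL.
      * apply Good_add. apply Good_scal, Good_one; lia. apply Good_add.
        -- apply (Good_sum N theta N (fun a k => Cmul (RtoC (b a)) (dL a k))). intros a Ha.
           apply (ZGood_Good N theta _ (b a * (sqrt (lam a) * Rdot N (vs a) (cos2theta theta)))).
           ++ apply (ZGood_scal N theta (b a) (dL a)). apply ZGood_scal. apply ZGood_Dv; lia.
           ++ rewrite (perp_lemma N C vs lam theta a); auto. ring.
        -- apply (Good_sum N theta N (fun a k => Csum N (fun a' => Cmul (RtoC (c a a')) (Cmul (dL a k) (dL a' k))))).
           intros a _. apply (Good_sum N theta N (fun a' k => Cmul (RtoC (c a a')) (Cmul (dL a k) (dL a' k)))).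
           intros a' _.
           apply (Good_ext N theta (fun k => Cmul (RtoC (c a a' * (sqrt (lam a) * sqrt (lam a')))) (Cmul (Dv N (vs a) k) (Dv N (vs a') k)))).
           { intros k _. unfold dL. rewrite !RtoC_mul. ring. }
           apply Good_scal, Good_DvDv; lia.
    + apply (ZGood_sandwich N theta _ (fun k => Cmul (RtoC (1/2)) (Dv N h k))).
      apply DiagOn_scale, DiagOn_dotZ. apply ZGood_scal, ZGood_Dv; lia.
Qed.
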